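(* Let $n\geq2$ be finite and $\mathfrak A\in SA_n$. Then the canonical extension $\mathfrak A^+$ of $\mathfrak A$ is completely representable.
   Context: $SA_n=\mathbf{Mod}(\Sigma'_n)$, where $\Sigma'_n$ (signature $\wedge,-,s^i_j,s_{ij}$, $i\neq j<n$) consists of the Boolean axioms, equations saying each $s^i_j,s_{ij}$ is a Boolean endomorphism, and $t_1(x)=t_2(x)$ for all words $t_1,t_2$ with the same associated map in ${}^nn$ (words map to compositions of the transpositions $[i,j]$ and replacements $[i/j]$, where $[i/j]$ sends $i$ to $j$ and fixes the rest). The canonical extension $\mathfrak A^+$ is the complex algebra of the ultrafilter frame of $\mathfrak A$: universe $\mathcal P(\mathrm{Uf}\mathfrak A)$, and for each unary operator $f$, $f^+(Y)=\{u\in\mathrm{Uf}\mathfrak A:\exists w\in Y\ \forall b\in w\ f(b)\in u\}$. $\mathfrak B$ is completely representable if there is an injective homomorphism $g:\mathfrak B\to\wp(D)$ with $D$ dipermutable (closed under $s\mapsto s\circ[i/j]$ and $s\mapsto s\circ[i,j]$) and $g(\prod Y)=\bigcap g[Y]$ whenever $\prod Y$ exists; $\wp(D)$ carries $\cap$, complement relative to $D$, $S^i_j(X)=\{q\in D:q\circ[i/j]\in X\}$, $S_{ij}(X)=\{q\in D:q\circ[i,j]\in X\}$. *)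

(* Defs.v *)
From HB Require Import structures.
From mathcomp Require Import all_boot.
Set Implicit Arguments. Unset Strict Implicit. Unset Printing Implicit Defensive.

(* The operators are given for all pairs (i,j); only those with i <> j are
   ever constrained or used (the paper's signature has i <> j only). *)
Record SAsig (n : nat) := SAsig_mk {
  sa_car :> Type;
  sa_meet : sa_car -> sa_car -> sa_car;
  sa_compl : sa_car -> sa_car;
  sa_sub : 'I_n -> 'I_n -> sa_car -> sa_car;
  sa_swp : 'I_n -> 'I_n -> sa_car -> sa_car }.

Definition repl n (i j : 'I_n) : 'I_n -> 'I_n :=
  fun k => if k == i then j else k.
Definition transp n (i j : 'I_n) : 'I_n -> 'I_n :=
  fun k => if k == i then j else if k == j then i else k.

Inductive letter (n : nat) := LSub of 'I_n & 'I_n | LSwp of 'I_n & 'I_n.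

Definition letter_ok n (l : letter n) : bool :=
  match l with LSub i j => i != j | LSwp i j => i != j end.

Definition letter_map n (l : letter n) : 'I_n -> 'I_n :=
  match l with LSub i j => repl i j | LSwp i j => transp i j end.

Definition letter_op n (A : SAsig n) (l : letter n) : A -> A :=
  match l with LSub i j => @sa_sub n A i j | LSwp i j => @sa_swp n A i j end.

Arguments letter_op {n} A l _.

Definition word_map n (w : seq (letter n)) : 'I_n -> 'I_n :=
  foldr (fun l f => letter_map l \o f) id w.

Definition word_op n (A : SAsig n) (w : seq (letter n)) : A -> A :=
  foldr (fun l f => letter_op A l \o f) id w.

(* Boolean algebra axioms in the signature (meet, complement):
   commutativity, associativity and Huntington's axiom (written for meet). *)
Arguments word_op {n} A w _.

Definition boolean_axioms n (A : SAsig n) : Prop :=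
  [/\ (forall x y : A, @sa_meet n A x y = @sa_meet n A y x),
      (forall x y z : A, @sa_meet n A (@sa_meet n A x y) z = @sa_meet n A x (@sa_meet n A y z))
    & (forall x y : A,
         @sa_meet n A (@sa_compl n A (@sa_meet n A (@sa_compl n A x) y))
                   (@sa_compl n A (@sa_meet n A (@sa_compl n A x) (@sa_compl n A y))) = x)].

Definition bool_endo n (A : SAsig n) (f : A -> A) : Prop :=
  (forall x y, f (@sa_meet n A x y) = @sa_meet n A (f x) (f y)) /\
  (forall x, f (@sa_compl n A x) = @sa_compl n A (f x)).

Definition is_SA n (A : SAsig n) : Prop :=
  [/\ boolean_axioms A,
      (forall i j : 'I_n, i != j -> bool_endo (@sa_sub n A i j)),
      (forall i j : 'I_n, i != j -> bool_endo (@sa_swp n A i j))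
    & (forall w1 w2 : seq (letter n),
         all (@letter_ok n) w1 -> all (@letter_ok n) w2 ->
         (forall k, word_map w1 k = word_map w2 k) ->
         forall x : A, word_op A w1 x = word_op A w2 x)].

Definition sa_le n (A : SAsig n) (x y : A) : Prop := @sa_meet n A x y = x.

Arguments sa_le {n} A x y.

Definition is_ultrafilter n (A : SAsig n) (u : A -> Prop) : Prop :=
  [/\ (forall x y, u x -> sa_le A x y -> u y),
      (forall x y, u x -> u y -> u (@sa_meet n A x y)),
      (forall x, u x \/ u (@sa_compl n A x))
    & (forall x, ~ (u x /\ u (@sa_compl n A x)))].

Arguments is_ultrafilter {n} A u.

Record Uf n (A : SAsig n) := Uf_mk {
  uf_pred :> A -> Prop;
  uf_prop : is_ultrafilter A uf_pred }.

Arguments Uf {n} A.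

Definition plus_op n (A : SAsig n) (f : A -> A) (Y : Uf A -> Prop) : Uf A -> Prop :=
  fun u => exists w : Uf A, Y w /\ forall b : A, w b -> u (f b).

Arguments plus_op {n} A f Y _.

(* The canonical extension A^+ : complex algebra of the ultrafilter frame,
   universe P(Uf A) (subsets as predicates). *)
Definition canext n (A : SAsig n) : SAsig n :=
  @SAsig_mk n (Uf A -> Prop)
    (fun X Y u => X u /\ Y u)
    (fun X u => ~ X u)
    (fun i j => plus_op A (@sa_sub n A i j))
    (fun i j => plus_op A (@sa_swp n A i j)).

Definition is_glb n (B : SAsig n) (Y : B -> Prop) (p : B) : Prop :=
  (forall y, Y y -> sa_le B p y) /\
  (forall q, (forall y, Y y -> sa_le B q y) -> sa_le B q p).

Definition dipermutable n (U : Type) (D : ('I_n -> U) -> Prop) : Prop :=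
  forall (q : 'I_n -> U) (i j : 'I_n), i != j -> D q ->
    D (q \o repl i j) /\ D (q \o transp i j).

(* Complete representability: an injective homomorphism g : B -> P(D)
   (set equalities stated pointwise) preserving all existing infima. *)
Definition completely_representable n (B : SAsig n) : Prop :=
  exists (U : Type) (D : ('I_n -> U) -> Prop) (g : B -> ('I_n -> U) -> Prop),
    dipermutable D /\
        (forall x q, g x q -> D q) /\
        (forall x y, (forall q, g x q <-> g y q) -> x = y) /\
        (forall x y q, g (@sa_meet n B x y) q <-> g x q /\ g y q) /\
        (forall x q, g (@sa_compl n B x) q <-> D q /\ ~ g x q) /\
        (forall (i j : 'I_n), i != j -> forall x q,
            g (@sa_sub n B i j x) q <-> D q /\ g x (q \o repl i j)) /\
        (forall (i j : 'I_n), i != j -> forall x q,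
            g (@sa_swp n B i j x) q <-> D q /\ g x (q \o transp i j)) /\
        (forall (Y : B -> Prop) (p : B), is_glb Y p ->
            forall q, g p q <-> D q /\ (forall y, Y y -> g y q)).

(* Main.v *)
From Stdlib Require Import FunctionalExtensionality PropExtensionality ProofIrrelevance.
Require Import Defs.
From HB Require Import structures.
From mathcomp Require Import all_boot.

Set Implicit Arguments. Unset Strict Implicit. Unset Printing Implicit Defensive.

Definition rep n (A : SAsig n) (u : Uf A) (w : seq (letter n)) (v : Uf A) :=
  forall b, v b <-> u (word_op A w b).

Definition Dq n (A : SAsig n) (q : 'I_n -> (Uf A * 'I_n)%type) : Prop :=
  exists (u : Uf A) (w : seq (letter n)),
    all (@letter_ok n) w /\ forall k, q k = (u, word_map w k).

Definition gg n (A : SAsig n) (X : Uf A -> Prop) (q : 'I_n -> (Uf A * 'I_n)%type) : Prop :=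
  Dq q /\ forall (v u : Uf A) w, all (@letter_ok n) w ->
    (forall k, q k = (u, word_map w k)) -> rep u w v -> X v.

Lemma uf_eq n (A : SAsig n) (u v : Uf A) : (forall b, u b <-> v b) -> u = v.
Proof.
case: u => pu Hu; case: v => pv Hv /= H.
have E : pu = pv.
  by apply: functional_extensionality => b; apply: propositional_extensionality.
subst pv. f_equal. apply: proof_irrelevance.
Qed.

Lemma uf_sub n (A : SAsig n) (u v : Uf A) : (forall b, u b -> v b) -> u = v.
Proof.
move=> H; apply: uf_eq => b; split; first exact: H.
move=> vb. case: (uf_prop u) => _ _ Hc _. case: (Hc b) => // ub'.
case: (uf_prop v) => _ _ _ Hn. exfalso; apply: (Hn b); split=> //; exact: H.
Qed.

Lemma word_op_cons n (A : SAsig n) l w x :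
  word_op A (l :: w) x = letter_op A l (word_op A w x).
Proof. by []. Qed.

Lemma word_map_cons n (l : letter n) w k :
  word_map (l :: w) k = letter_map l (word_map w k).
Proof. by []. Qed.

Lemma word_op_rcons n (A : SAsig n) w l x :
  word_op A (rcons w l) x = word_op A w (letter_op A l x).
Proof.
elim: w => [|l' w IH] //. by rewrite rcons_cons word_op_cons IH word_op_cons.
Qed.

Lemma word_map_rcons n (w : seq (letter n)) l k :
  word_map (rcons w l) k = word_map w (letter_map l k).
Proof.
elim: w => [|l' w IH] //. by rewrite rcons_cons word_map_cons IH word_map_cons.
Qed.

Lemma word_op_endo n (A : SAsig n) (HA : is_SA A) w :
  all (@letter_ok n) w -> bool_endo (word_op A w).
Proof.
case: HA => _ Hs Hw _.
elim: w => [|l w IH] Hok.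
  by split.
move: Hok => /andP [Hl Hw'].
case: (IH Hw') => IH1 IH2.
have [L1 L2] : bool_endo (letter_op A l).
  by case: l Hl => i j /= Hij; [apply: Hs | apply: Hw].
by split => *; rewrite !word_op_cons ?IH1 ?L1 ?IH2 ?L2.
Qed.

Lemma pull_ex n (A : SAsig n) (HA : is_SA A) (u : Uf A) w :
  all (@letter_ok n) w -> exists v : Uf A, rep u w v.
Proof.
move=> Hok; have [E1 E2] := word_op_endo HA Hok.
case: (uf_prop u) => U1 U2 U3 U4.
have H : is_ultrafilter A (fun b => u (word_op A w b)).
  split.
  - move=> x y ux Hxy; apply: (U1 _ _ ux); by rewrite /sa_le -E1 Hxy.
  - move=> x y ux uy; rewrite E1; exact: U2.
  - move=> x; rewrite E2; exact: U3.
  - move=> x; rewrite E2; exact: U4.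
by exists (Uf_mk H) => b; split.
Qed.

Lemma rep_uniq n (A : SAsig n) (HA : is_SA A) (Hn : 0 < n) (u u' : Uf A) w w' (v v' : Uf A) :
  all (@letter_ok n) w -> all (@letter_ok n) w' ->
  (forall k : 'I_n, (u, word_map w k) = (u', word_map w' k)) ->
  rep u w v -> rep u' w' v' -> v = v'.
Proof.
move=> Hw Hw' E R R'.
have Hu : u = u' := congr1 fst (E (Ordinal Hn)).
have Hm : forall k, word_map w k = word_map w' k := fun k => congr1 snd (E k).
case: HA => _ _ _ Hax.
apply: uf_eq => b; split.
  by move/R; rewrite Hu (Hax w w' Hw Hw' Hm b) => /R'.
by move/R'; rewrite -Hu -(Hax w w' Hw Hw' Hm b) => /R.
Qed.

Lemma g_label n (A : SAsig n) (HA : is_SA A) (Hn : 0 < n) q (u : Uf A) w (v : Uf A) :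
  all (@letter_ok n) w -> (forall k, q k = (u, word_map w k)) -> rep u w v ->
  forall X, gg X q <-> X v.
Proof.
move=> Hw Hq Hr X; split.
  case=> _ H; exact: H Hw Hq Hr.
move=> Xv; split; first by exists u, w.
move=> v' u' w' Hw' Hq' Hr'.
have -> : v' = v; last done.
apply: (rep_uniq HA Hn Hw' Hw _ Hr' Hr) => k; by rewrite -Hq' -Hq.
Qed.

Lemma g_letter n (A : SAsig n) (HA : is_SA A) (Hn : 0 < n) (l : letter n) :
  letter_ok l -> forall X q,
  gg (plus_op A (letter_op A l) X) q <-> Dq q /\ gg X (q \o letter_map l).
Proof.
move=> Hl X q.
have key : Dq q -> exists (v v2 : Uf A),
   (forall Z, gg Z q <-> Z v) /\ (forall Z, gg Z (q \o letter_map l) <-> Z v2)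
   /\ (forall b, v2 b <-> v (letter_op A l b)).
  case=> u [w [Hw Hq]].
  have [v Hv] := pull_ex HA u Hw.
  have Hw2 : all (@letter_ok n) (rcons w l) by rewrite all_rcons Hl Hw.
  have [v2 Hv2] := pull_ex HA u Hw2.
  have Hq2 : forall k, (q \o letter_map l) k = (u, word_map (rcons w l) k).
    by move=> k /=; rewrite Hq word_map_rcons.
  exists v, v2; split; first exact: (g_label HA Hn Hw Hq Hv).
  split; first exact: (g_label HA Hn Hw2 Hq2 Hv2).
  move=> b; split.
    by move/Hv2; rewrite word_op_rcons => /Hv.
  by move/Hv; rewrite -word_op_rcons => /Hv2.
split.
  move=> Hg; have D := Hg.1; split=> //.
  have [v [v2 [L1 [L2 L3]]]] := key D.
  apply/L2. move/L1: Hg => [w' [Xw' Hw']].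
  have -> : v2 = w'; last done.
  symmetry; apply: uf_sub => b /Hw' /L3; done.
case=> D Hg.
have [v [v2 [L1 [L2 L3]]]] := key D.
apply/L1. move/L2: Hg => Xv2. exists v2; split=> // b /L3; done.
Qed.

Theorem theorem4p17 (n : nat) (Hn : 2 <= n) (A : SAsig n) (HA : is_SA A) :
  completely_representable (canext A).
Proof.
have Hn0 : 0 < n by apply: leq_trans Hn.
have lab : forall q, Dq q -> exists v : Uf A, forall Z, gg Z q <-> Z v.
  move=> q [u [w [Hw Hq]]].
  have [v Hv] := pull_ex HA u Hw.
  exists v; exact: (g_label HA Hn0 Hw Hq Hv).
exists (Uf A * 'I_n)%type, (@Dq n A), (@gg n A).
split.
  move=> q i j Hij [u [w [Hw Hq]]]; split.
    exists u, (rcons w (LSub i j)); split; first by rewrite all_rcons /= Hij Hw.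
    by move=> k; rewrite /= Hq word_map_rcons.
  exists u, (rcons w (LSwp i j)); split; first by rewrite all_rcons /= Hij Hw.
  by move=> k; rewrite /= Hq word_map_rcons.
split; first by move=> x q [].
split.
  move=> X Y H.
  apply: functional_extensionality => v; apply: propositional_extensionality.
  have Hq : forall k : 'I_n, (fun k => (v, k)) k = (v, word_map [::] k) by [].
  have Hv : rep v [::] v by move=> b; split.
  have L := g_label HA Hn0 (isT : all (@letter_ok n) [::]) Hq Hv.
  split=> /L /H /L //.
split.
  move=> X Y q; split.
    move=> H; have [v L] := lab q H.1.
    move/L: H => [? ?]; split; apply/L => //.
  case=> H1 H2; have [v L] := lab q H1.1.
  apply/L; split; apply/L => //.
split.
  move=> X q; split.
    move=> H; have D := H.1; have [v L] := lab q D.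
    move/L: H => H; split; first exact: D.
    by move/L.
  case=> D H; have [v L] := lab q D.
  apply/L => Xv; apply: H; exact/L.
split.
  move=> i j Hij x q; exact: (g_letter HA Hn0 (l := LSub i j) Hij x q).
split.
  move=> i j Hij x q; exact: (g_letter HA Hn0 (l := LSwp i j) Hij x q).
move=> Y p [Hlb Hgr] q.
have Hp : forall v, p v <-> forall y, Y y -> y v.
  move=> v; split.
    move=> pv y Yy.
    have E : (fun u => p u /\ y u) = p := Hlb y Yy.
    have Ev : (p v /\ y v) = p v := congr1 (fun f : Uf A -> Prop => f v) E.
    by move: pv; rewrite -Ev => -[].
  move=> H.
  pose q0 := fun u : Uf A => forall y, Y y -> y u.
  have E : (fun u => q0 u /\ p u) = q0.
    apply: (Hgr q0) => y Yy.
    apply: functional_extensionality => u; apply: propositional_extensionality.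
    split; [by case | move=> Hu; split => //; exact: Hu].
  have Ev : (q0 v /\ p v) = q0 v := congr1 (fun f : Uf A -> Prop => f v) E.
  have : q0 v by exact: H.
  by rewrite -Ev => -[].
split.
  move=> H; have D := H.1; have [v L] := lab q D.
  move/L: H => /Hp H; split; first exact: D.
  by move=> y Yy; apply/L; exact: H.
case=> D H; have [v L] := lab q D.
apply/L; apply/Hp => y Yy; apply/L; exact: H.
Qed.
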